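(* Over $\mathsf{RCA}_0$: (1) $\mathsf{ER}^2_2 \lor \mathsf{I}\Sigma^0_2$ implies $\mathsf{ER}^1$; (2) $\mathsf{ER}^1$ implies $\mathsf{RT}^1$.
   Context: $\mathbb{Q}$ is a fixed primitive recursive presentation of the rationals with domain $\mathbb{N}$. A set $H\subseteq\mathbb{Q}$ is called dense if $(H,\leq_\mathbb{Q})$ is a dense linear order (understood non-trivially, so that dense sets are infinite). $\mathsf{ER}^2_2$: for every coloring $f\colon[\mathbb{Q}]^2\to 2$ there exists either an infinite set $H$ with $f(x,y)=0$ for all distinct $x,y\in H$, or a dense set $H$ with $f(x,y)=1$ for all distinct $x,y\in H$. $\mathsf{ER}^1$: for every $n$ and every $f\colon\mathbb{Q}\to n$ there exists a dense set $H\subseteq\mathbb{Q}$ on which $f$ is constant. $\mathsf{RT}^1$: for every $k$ and every $f\colon\mathbb{N}\to k$ there is an infinite set on which $f$ is constant. $\mathsf{I}\Sigma^0_2$ is the $\Sigma^0_2$ induction scheme. *)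

(* Defs.v *)
(** * L_2 structures (general, possibly nonstandard, Henkin models) *)
Record L2structure : Type := {
  M : Type;                 (* first-order (number) part *)
  S : Type;                 (* second-order (set) part   *)
  zero : M;
  one : M;
  add : M -> M -> M;
  mul : M -> M -> M;
  lt : M -> M -> Prop;
  mem : M -> S -> Prop
}.

Arguments zero {_}. Arguments one {_}. Arguments add {_}. Arguments mul {_}.
Arguments lt {_}. Arguments mem {_}.

(** * Syntax of arithmetical formulas (number variables in de Bruijn style,
      free set variables indexed by nat; no set quantifiers) *)
Inductive term : Type :=
  | Var (n : nat) | Zero | One | Add (t u : term) | Mul (t u : term).

Inductive formula : Type :=
  | FEq (t u : term) | FLt (t u : term) | FMem (t : term) (X : nat)
  | FNeg (f : formula) | FAnd (f g : formula) | FOr (f g : formula)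
  | FImp (f g : formula)
  | FAll (f : formula) | FEx (f : formula)
  | FBAll (t : term) (f : formula)                    (* forall x < t, f *)
  | FBEx (t : term) (f : formula).                    (* exists x < t, f *)

Fixpoint Delta0 (f : formula) : Prop :=
  match f with
  | FEq _ _ | FLt _ _ | FMem _ _ => True
  | FNeg g => Delta0 g
  | FAnd g h | FOr g h | FImp g h => Delta0 g /\ Delta0 h
  | FAll _ | FEx _ => False
  | FBAll _ g | FBEx _ g => Delta0 g
  end.

Definition Sigma1 (f : formula) : Prop :=
  match f with FEx g => Delta0 g | _ => False end.
Definition Pi1 (f : formula) : Prop :=
  match f with FAll g => Delta0 g | _ => False end.
Definition Sigma2 (f : formula) : Prop :=
  match f with FEx (FAll g) => Delta0 g | _ => False end.

Fixpoint setfree (f : formula) : Prop :=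
  match f with
  | FEq _ _ | FLt _ _ => True
  | FMem _ _ => False
  | FNeg g | FAll g | FEx g | FBAll _ g | FBEx _ g => setfree g
  | FAnd g h | FOr g h | FImp g h => setfree g /\ setfree h
  end.

Definition scons {T : Type} (a : T) (e : nat -> T) : nat -> T :=
  fun n => match n with O => a | Datatypes.S k => e k end.

Section Eval.
Variable A : L2structure.

Fixpoint teval (e : nat -> M A) (t : term) : M A :=
  match t with
  | Var n => e n
  | Zero => zero
  | One => one
  | Add t u => add (teval e t) (teval e u)
  | Mul t u => mul (teval e t) (teval e u)
  end.

Fixpoint feval (e : nat -> M A) (s : nat -> S A) (f : formula) : Prop :=
  match f with
  | FEq t u => teval e t = teval e u
  | FLt t u => lt (teval e t) (teval e u)
  | FMem t X => mem (teval e t) (s X)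
  | FNeg g => ~ feval e s g
  | FAnd g h => feval e s g /\ feval e s h
  | FOr g h => feval e s g \/ feval e s h
  | FImp g h => feval e s g -> feval e s h
  | FAll g => forall a : M A, feval (scons a e) s g
  | FEx g => exists a : M A, feval (scons a e) s g
  | FBAll t g => forall a : M A, lt a (teval e t) -> feval (scons a e) s g
  | FBEx t g => exists a : M A, lt a (teval e t) /\ feval (scons a e) s g
  end.

(** * RCA_0 (Simpson, SOSOA, Def. I.7.3 / II.1) *)
Definition BasicAxioms : Prop :=
  (forall m : M A, add m one <> zero) /\
  (forall m n : M A, add m one = add n one -> m = n) /\
  (forall m : M A, add m zero = m) /\
  (forall m n : M A, add m (add n one) = add (add m n) one) /\
  (forall m : M A, mul m zero = zero) /\
  (forall m n : M A, mul m (add n one) = add (mul m n) m) /\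
  (forall m : M A, ~ lt m zero) /\
  (forall m n : M A, lt m (add n one) <-> (lt m n \/ m = n)).

(** induction for formulas of a class [C]; variable 0 is the induction
    variable, all other number and set variables are parameters *)
Definition Induction (C : formula -> Prop) : Prop :=
  forall (f : formula), C f ->
  forall (e : nat -> M A) (s : nat -> S A),
    feval (scons zero e) s f ->
    (forall n, feval (scons n e) s f -> feval (scons (add n one) e) s f) ->
    forall n, feval (scons n e) s f.

Definition Delta01Comprehension : Prop :=
  forall (f g : formula), Sigma1 f -> Pi1 g ->
  forall (e : nat -> M A) (s : nat -> S A),
    (forall n, feval (scons n e) s f <-> feval (scons n e) s g) ->
    exists X : S A, forall n, mem n X <-> feval (scons n e) s f.

Definition RCA0 : Prop :=
  BasicAxioms /\ Induction Sigma1 /\ Delta01Comprehension.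

Definition ISigma02 : Prop := Induction Sigma2.

Definition pair (i j : M A) : M A := add (mul (add i j) (add i j)) i.

Definition infinite (H : S A) : Prop :=
  forall m : M A, exists n, lt m n /\ mem n H.

(** [F] codes a function from N (= domain of Q) into {c | c < k} *)
Definition isFunInto (F : S A) (k : M A) : Prop :=
  forall x : M A, exists c, lt c k /\ mem (pair x c) F /\
                  forall c', mem (pair x c') F -> c' = c.

(** [F] codes a coloring [N]^2 -> 2; [x,y] with x < y coded by pair x y *)
Definition two : M A := add one one.

Definition is2Coloring (F : S A) : Prop :=
  forall x y : M A, lt x y ->
    exists c, lt c two /\ mem (pair (pair x y) c) F /\
              forall c', mem (pair (pair x y) c') F -> c' = c.

Definition colorOf (F : S A) (x y c : M A) : Prop :=
  (lt x y /\ mem (pair (pair x y) c) F) \/ (lt y x /\ mem (pair (pair y x) c) F).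

Definition homogeneous (F : S A) (H : S A) (c : M A) : Prop :=
  forall x y, mem x H -> mem y H -> x <> y -> colorOf F x y c.

(** * The presentation of Q: strict order <_Q given by a fixed parameter-free
      Delta^0_1 definition (Sigma^0_1 formula qs, Pi^0_1 formula qp in the
      variables 0 (= x) and 1 (= y)) *)
Definition env2 (x y : M A) : nat -> M A := scons x (scons y (fun _ => zero)).

Definition ltQ (qs : formula) (x y : M A) : Prop :=
  forall s : nat -> S A, feval (env2 x y) s qs.

Definition QPresentationOK (qs qp : formula) : Prop :=
  (forall s x y, feval (env2 x y) s qs <-> feval (env2 x y) s qp) /\
  (forall x, ~ ltQ qs x x) /\
  (forall x y z, ltQ qs x y -> ltQ qs y z -> ltQ qs x z) /\
  (forall x y, ltQ qs x y \/ x = y \/ ltQ qs y x) /\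
  (forall x y, ltQ qs x y -> exists z, ltQ qs x z /\ ltQ qs z y) /\
  (forall x, exists y, ltQ qs x y) /\
  (forall x, exists y, ltQ qs y x).

(** dense (non-trivially): at least two elements, and dense under <=_Q *)
Definition denseQ (qs : formula) (H : S A) : Prop :=
  (exists x y, mem x H /\ mem y H /\ x <> y) /\
  (forall x y, mem x H -> mem y H -> ltQ qs x y ->
     exists z, mem z H /\ ltQ qs x z /\ ltQ qs z y).

Definition ER22 (qs : formula) : Prop :=
  forall F : S A, is2Coloring F ->
    (exists H, infinite H /\ homogeneous F H zero) \/
    (exists H, denseQ qs H /\ homogeneous F H one).

Definition ER1 (qs : formula) : Prop :=
  forall (n : M A) (F : S A), isFunInto F n ->
    exists (H : S A) (c : M A), denseQ qs H /\ forall x, mem x H -> mem (pair x c) F.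

Definition RT1 : Prop :=
  forall (k : M A) (F : S A), isFunInto F k ->
    exists (H : S A) (c : M A), infinite H /\ forall x, mem x H -> mem (pair x c) F.

End Eval.

(* Main.v *)
Require Import Defs.
From Stdlib Require Import Classical FunctionalExtensionality Ring.

Fixpoint tsubst (σ : nat -> term) (t : term) : term :=
  match t with
  | Var n => σ n | Zero => Zero | One => One
  | Add t u => Add (tsubst σ t) (tsubst σ u)
  | Mul t u => Mul (tsubst σ t) (tsubst σ u) end.

Definition up (σ : nat -> term) : nat -> term :=
  fun n => match n with O => Var O | Datatypes.S k => tsubst (fun i => Var (Datatypes.S i)) (σ k) end.

Fixpoint fsubst (σ : nat -> term) (f : formula) : formula :=
  match f with
  | FEq t u => FEq (tsubst σ t) (tsubst σ u)
  | FLt t u => FLt (tsubst σ t) (tsubst σ u)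
  | FMem t X => FMem (tsubst σ t) X
  | FNeg g => FNeg (fsubst σ g)
  | FAnd g h => FAnd (fsubst σ g) (fsubst σ h)
  | FOr g h => FOr (fsubst σ g) (fsubst σ h)
  | FImp g h => FImp (fsubst σ g) (fsubst σ h)
  | FAll g => FAll (fsubst (up σ) g)
  | FEx g => FEx (fsubst (up σ) g)
  | FBAll t g => FBAll (tsubst σ t) (fsubst (up σ) g)
  | FBEx t g => FBEx (tsubst σ t) (fsubst (up σ) g)
  end.

Lemma teval_subst A e σ t : teval A e (tsubst σ t) = teval A (fun n => teval A e (σ n)) t.
Proof. induction t; simpl; congruence. Qed.

Lemma up_env A (e : nat -> M A) σ a :
  (fun n => teval A (scons a e) (up σ n)) = scons a (fun n => teval A e (σ n)).
Proof. extensionality n; destruct n; simpl; [reflexivity|]. rewrite teval_subst. reflexivity. Qed.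

Lemma feval_subst A f : forall e s σ,
  feval A e s (fsubst σ f) <-> feval A (fun n => teval A e (σ n)) s f.
Proof.
  induction f; intros e s σ; simpl; try rewrite !teval_subst; try tauto;
  try (rewrite IHf; tauto);
  try (rewrite IHf1, IHf2; tauto);
  try (setoid_rewrite IHf; setoid_rewrite up_env; tauto).
Qed.

Lemma Delta0_subst f : forall σ, Delta0 (fsubst σ f) <-> Delta0 f.
Proof. induction f; intros σ; simpl; try tauto; try (rewrite IHf1, IHf2; tauto); apply IHf. Qed.

Lemma setfree_indep A f : setfree f -> forall e s s', feval A e s f <-> feval A e s' f.
Proof.
  induction f; intros Hf e s s'; simpl in *; try tauto;
  try (rewrite (IHf Hf e s s'); tauto);
  try (destruct Hf as [H1 H2]; rewrite (IHf1 H1 e s s'), (IHf2 H2 e s s'); tauto);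
  try (split; intros H a; try intros Ha; try specialize (H a); try (destruct H as [a H]; exists a); firstorder; fail).
  all: try (split; intros [a Ha]; exists a; firstorder; fail).
Qed.


Section Model.
Variable A : L2structure.
Hypothesis HR : RCA0 A.
Variable s0 : S A.

Definition ss : nat -> S A := fun _ => s0.
Definition E0 : nat -> M A := fun _ => zero.

Lemma ind_d0 (g : formula) : Delta0 g -> forall (e : nat -> M A) (s : nat -> S A) (P : M A -> Prop),
  (forall n, feval A (scons n e) s g <-> P n) -> P zero -> (forall n, P n -> P (add n one)) -> forall n, P n.
Proof.
  intros Hg e s P HP H0 HS n.
  destruct HR as [_ [HI _]].
  assert (Hf : forall m, feval A (scons m e) s (FEx (fsubst (fun i => Var (Datatypes.S i)) g)) <-> P m).
  { intro m; simpl. split.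
    - intros [a Ha]. rewrite feval_subst in Ha. apply HP. exact Ha.
    - intro Hm. exists zero. rewrite feval_subst. apply HP. exact Hm. }
  apply Hf. apply HI. simpl. rewrite Delta0_subst. exact Hg.
  apply Hf, H0. intros m Hm. apply Hf, HS, Hf, Hm.
Qed.

Lemma ind_s1 (g : formula) : Delta0 g -> forall (e : nat -> M A) (s : nat -> S A) (P : M A -> Prop),
  (forall n, feval A (scons n e) s (FEx g) <-> P n) -> P zero -> (forall n, P n -> P (add n one)) -> forall n, P n.
Proof.
  intros Hg e s P HP H0 HS n.
  destruct HR as [_ [HI _]].
  apply HP. apply HI. exact Hg.
  apply HP, H0. intros m Hm. apply HP, HS, HP, Hm.
Qed.

Ltac indd f env := 
  refine (ind_d0 f ltac:(simpl; tauto) env ss _ _ _ _); [intro; simpl; reflexivity | | ].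

Lemma ax1 : forall m : M A, add m one <> zero. Proof. apply HR. Qed.
Lemma ax2 : forall m n : M A, add m one = add n one -> m = n. Proof. apply HR. Qed.
Lemma ax3 : forall m : M A, add m zero = m. Proof. apply HR. Qed.
Lemma ax4 : forall m n : M A, add m (add n one) = add (add m n) one. Proof. apply HR. Qed.
Lemma ax5 : forall m : M A, mul m zero = zero. Proof. apply HR. Qed.
Lemma ax6 : forall m n : M A, mul m (add n one) = add (mul m n) m. Proof. apply HR. Qed.
Lemma ax7 : forall m : M A, ~ lt m zero. Proof. apply HR. Qed.
Lemma ax8 : forall m n : M A, lt m (add n one) <-> (lt m n \/ m = n). Proof. apply HR. Qed.

Lemma zero_or_succ : forall n : M A, n = zero \/ exists p, n = add p one.
Proof.
  assert (H : forall n : M A, n = zero \/ exists p, lt p n /\ n = add p one).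
  { indd (FOr (FEq (Var 0) Zero) (FBEx (Var 0) (FEq (Var 1) (Add (Var 0) One)))) E0.
    - left; reflexivity.
    - intros n _. right. exists n. split; [apply ax8; right; reflexivity | reflexivity]. }
  intro n; destruct (H n) as [H1|[p [_ Hp]]]; [left|right; exists p]; assumption.
Qed.

Lemma add0l : forall n : M A, add zero n = n.
Proof.
  indd (FEq (Add Zero (Var 0)) (Var 0)) E0.
  - apply ax3.
  - intros n IH. rewrite ax4, IH. reflexivity.
Qed.

Lemma addSl (m : M A) : forall n, add (add m one) n = add (add m n) one.
Proof.
  indd (FEq (Add (Add (Var 1) One) (Var 0)) (Add (Add (Var 1) (Var 0)) One)) (scons m E0).
  - rewrite !ax3. reflexivity.
  - intros n IH. rewrite !ax4, IH. reflexivity.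
Qed.

Lemma addC (m : M A) : forall n, add m n = add n m.
Proof.
  indd (FEq (Add (Var 1) (Var 0)) (Add (Var 0) (Var 1))) (scons m E0).
  - rewrite ax3, add0l. reflexivity.
  - intros n IH. rewrite ax4, IH, addSl. reflexivity.
Qed.

Lemma addA (a b : M A) : forall n, add a (add b n) = add (add a b) n.
Proof.
  indd (FEq (Add (Var 1) (Add (Var 2) (Var 0))) (Add (Add (Var 1) (Var 2)) (Var 0))) (scons a (scons b E0)).
  - rewrite !ax3. reflexivity.
  - intros n IH. rewrite !ax4, IH. reflexivity.
Qed.

Lemma mul0l : forall n : M A, mul zero n = zero.
Proof.
  indd (FEq (Mul Zero (Var 0)) Zero) E0.
  - apply ax5.
  - intros n IH. rewrite ax6, IH, ax3. reflexivity.
Qed.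

Lemma mulSl (m : M A) : forall n, mul (add m one) n = add (mul m n) n.
Proof.
  indd (FEq (Mul (Add (Var 1) One) (Var 0)) (Add (Mul (Var 1) (Var 0)) (Var 0))) (scons m E0).
  - rewrite !ax5, ax3. reflexivity.
  - intros n IH. rewrite !ax6, IH.
    rewrite <- !addA. f_equal. rewrite !ax4, (addC n m). reflexivity.
Qed.

Lemma mulC (m : M A) : forall n, mul m n = mul n m.
Proof.
  indd (FEq (Mul (Var 1) (Var 0)) (Mul (Var 0) (Var 1))) (scons m E0).
  - rewrite ax5, mul0l. reflexivity.
  - intros n IH. rewrite ax6, IH, mulSl. reflexivity.
Qed.

Lemma mulDr (a b : M A) : forall n, mul a (add b n) = add (mul a b) (mul a n).
Proof.
  indd (FEq (Mul (Var 1) (Add (Var 2) (Var 0))) (Add (Mul (Var 1) (Var 2)) (Mul (Var 1) (Var 0)))) (scons a (scons b E0)).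
  - rewrite !ax3, ax5, ax3. reflexivity.
  - intros n IH. rewrite ax4, !ax6, IH, addA. reflexivity.
Qed.

Lemma mulA (a b : M A) : forall n, mul (mul a b) n = mul a (mul b n).
Proof.
  indd (FEq (Mul (Mul (Var 1) (Var 2)) (Var 0)) (Mul (Var 1) (Mul (Var 2) (Var 0)))) (scons a (scons b E0)).
  - rewrite !ax5. reflexivity.
  - intros n IH. rewrite !ax6, mulDr, IH. reflexivity.
Qed.

Lemma one_eq : (one : M A) = add zero one. Proof. rewrite add0l; reflexivity. Qed.

Lemma mul1l (n : M A) : mul one n = n.
Proof. rewrite mulC, one_eq, ax6, ax5, add0l. reflexivity. Qed.

Lemma Msrt : semi_ring_theory (zero : M A) one add mul eq.
Proof.
  constructor.
  - apply add0l.
  - apply addC.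
  - apply addA.
  - apply mul1l.
  - apply mul0l.
  - apply mulC.
  - intros; symmetry; apply mulA.
  - intros n m p. rewrite !(mulC _ p). apply mulDr.
Qed.

Add Ring Mring : Msrt.

Lemma test (a b : M A) : mul (add a b) (add a b) = add (mul a a) (add (mul (add one one) (mul a b)) (mul b b)).
Proof. ring. Qed.


Lemma add_cancel (a b : M A) : forall n, add a n = add b n -> a = b.
Proof.
  indd (FImp (FEq (Add (Var 1) (Var 0)) (Add (Var 2) (Var 0))) (FEq (Var 1) (Var 2))) (scons a (scons b E0)).
  - rewrite !ax3; auto.
  - intros n IH H. rewrite !ax4 in H. apply IH, ax2, H.
Qed.

Lemma add_cancel_l (a b n : M A) : add n a = add n b -> a = b.
Proof. intro H. apply (add_cancel a b n). rewrite (addC a), (addC b). exact H. Qed.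

Lemma lt_succ_r (a d : M A) : lt a (add (add a d) one).
Proof.
  revert d.
  indd (FLt (Var 1) (Add (Add (Var 1) (Var 0)) One)) (scons a E0).
  - rewrite ax3. apply ax8. right; reflexivity.
  - intros n IH. rewrite ax4. apply ax8. left. exact IH.
Qed.

Lemma lt_iff (a b : M A) : lt a b <-> exists d, b = add (add a d) one.
Proof.
  split.
  - revert b.
    refine (ind_s1 (FOr (FNeg (FLt (Var 2) (Var 1))) (FEq (Var 1) (Add (Add (Var 2) (Var 0)) One)))
             ltac:(simpl; tauto) (scons a E0) ss _ _ _ _).
    + intro n; simpl. split.
      * intros [d [H|H]] Hl; [contradiction|exists d; exact H].
      * intro H. destruct (classic (lt a n)) as [Hl|Hl].
        -- destruct (H Hl) as [d Hd]. exists d. right; exact Hd.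
        -- exists zero. left; exact Hl.
    + intro H. exfalso. exact (ax7 _ H).
    + intros n IH Hl. apply ax8 in Hl. destruct Hl as [Hl|Hl].
      * destruct (IH Hl) as [d Hd]. exists (add d one). rewrite Hd. ring.
      * exists zero. rewrite Hl. ring.
  - intros [d Hd]. rewrite Hd. apply lt_succ_r.
Qed.

Lemma succ_ne0 (a : M A) : add a one <> zero. Proof. apply ax1. Qed.

Lemma lt_irrefl (a : M A) : ~ lt a a.
Proof.
  intro H. apply lt_iff in H. destruct H as [d Hd].
  assert (H2 : add a zero = add a (add d one)) by (rewrite ax3 at 1; rewrite Hd at 1; ring).
  apply add_cancel_l in H2. apply (ax1 d). symmetry. exact H2.
Qed.

Lemma lt_trans (a b c : M A) : lt a b -> lt b c -> lt a c.
Proof.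
  rewrite !lt_iff. intros [d Hd] [d' Hd']. exists (add (add d d') one). rewrite Hd', Hd. ring.
Qed.

Lemma lt_asym (a b : M A) : lt a b -> ~ lt b a.
Proof. intros H1 H2. exact (lt_irrefl a (lt_trans _ _ _ H1 H2)). Qed.

Lemma lt_ne (a b : M A) : lt a b -> a <> b.
Proof. intros H1 H2. subst. exact (lt_irrefl _ H1). Qed.

Lemma zero_lt_succ (p : M A) : lt zero (add p one).
Proof. apply lt_iff. exists p. ring. Qed.

Lemma trich (a : M A) : forall b, lt a b \/ a = b \/ lt b a.
Proof.
  indd (FOr (FLt (Var 1) (Var 0)) (FOr (FEq (Var 1) (Var 0)) (FLt (Var 0) (Var 1)))) (scons a E0).
  - destruct (zero_or_succ a) as [H|[p H]]; subst; [right; left; reflexivity|].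
    right; right. apply zero_lt_succ.
  - intros n [H|[H|H]].
    + left. apply ax8. left; exact H.
    + left. apply ax8. right; exact H.
    + apply lt_iff in H. destruct H as [d Hd].
      destruct (zero_or_succ d) as [H|[p H]]; subst.
      * right; left. ring.
      * right; right. apply lt_iff. exists p. ring.
Qed.

Lemma le_lt_S (a b : M A) : lt a (add b one) <-> (lt a b \/ a = b). Proof. apply ax8. Qed.

Lemma not_lt_le (a b : M A) : ~ lt a b -> lt b a \/ b = a.
Proof. intro H. destruct (trich a b) as [H1|[H1|H1]]; [contradiction|right; auto|left; auto]. Qed.

Lemma lt_add_r (a b : M A) : lt a (add (add a b) one).
Proof. apply lt_succ_r. Qed.

Lemma lt_S_le (a b : M A) : lt a b -> lt (add a one) b \/ add a one = b.
Proof.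
  intro H. apply lt_iff in H. destruct H as [d Hd]. subst.
  destruct (zero_or_succ d) as [H|[p H]]; subst.
  - right. ring.
  - left. apply lt_iff. exists p. ring.
Qed.

Lemma le_lt_trans (a b c : M A) : (lt a b \/ a = b) -> lt b c -> lt a c.
Proof. intros [H|H] H2; [eapply lt_trans; eauto | subst; auto]. Qed.

Definition pr (i j : M A) : M A := pair A i j.

Lemma pr_eq (i j : M A) : pr i j = add (mul (add i j) (add i j)) i.
Proof. reflexivity. Qed.

Lemma pr_lt_sum (i j i' j' : M A) : lt (add i j) (add i' j') -> lt (pr i j) (pr i' j').
Proof.
  intro H. apply lt_iff in H. destruct H as [d Hd]. apply lt_iff.
  exists (add (add (add j (mul (add i j) (add (mul (add one one) d) one))) (add (mul d d) (add d d))) i').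
  rewrite !pr_eq, Hd. ring.
Qed.

Lemma pr_inj (i j i' j' : M A) : pr i j = pr i' j' -> i = i' /\ j = j'.
Proof.
  intro H.
  assert (Hs : add i j = add i' j').
  { destruct (trich (add i j) (add i' j')) as [H1|[H1|H1]]; auto.
    - apply pr_lt_sum in H1. rewrite H in H1. destruct (lt_irrefl _ H1).
    - apply pr_lt_sum in H1. rewrite H in H1. destruct (lt_irrefl _ H1). }
  rewrite !pr_eq, Hs in H. apply add_cancel_l in H. subst. split; auto.
  apply add_cancel_l in Hs. exact Hs.
Qed.

Lemma pr_bound1 (i j : M A) : lt i (add (pr i j) one).
Proof. apply lt_iff. exists (mul (add i j) (add i j)). rewrite pr_eq. ring. Qed.

Lemma pr_bound2 (i j : M A) : lt j (add (pr i j) one).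
Proof.
  apply lt_iff. rewrite pr_eq.
  destruct (zero_or_succ (add i j)) as [H|[p H]].
  - rewrite H. assert (j = zero).
    { destruct (zero_or_succ j) as [H2|[q H2]]; auto. subst. exfalso. apply (ax1 (add i q)). rewrite <- H. ring. }
    subst. exists i. ring.
  - exists (add (mul (add p one) p) (add i i)).
    transitivity (add (add (add (add i j) (mul (add p one) p)) i) one).
    + rewrite H. ring.
    + ring.
Qed.

Lemma comp_d0 (d : formula) : Delta0 d -> forall (e : nat -> M A) (s : nat -> S A) (P : M A -> Prop),
  (forall n, feval A (scons n e) s d <-> P n) -> exists X, forall n, mem n X <-> P n.
Proof.
  intros Hd e s P HP.
  destruct HR as [_ [_ HC]].
  destruct (HC (FEx (fsubst (fun i => Var (Datatypes.S i)) d)) (FAll (fsubst (fun i => Var (Datatypes.S i)) d)))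
    with (e := e) (s := s) as [X HX].
  - simpl. rewrite Delta0_subst. exact Hd.
  - simpl. rewrite Delta0_subst. exact Hd.
  - intro n; simpl. setoid_rewrite feval_subst. simpl. split.
    + intros [a Ha] b. exact Ha.
    + intros H. exists zero. apply (H zero).
  - exists X. intro n. rewrite HX, <- HP. simpl. setoid_rewrite feval_subst. simpl. split.
    + intros [a Ha]. exact Ha.
    + intro H. exists zero. exact H.
Qed.

Definition pairT (t u : term) : term := Add (Mul (Add t u) (Add t u)) t.

Lemma teval_pairT e t u : teval A e (pairT t u) = pr (teval A e t) (teval A e u).
Proof. reflexivity. Qed.

Variables qs qp : formula.
Hypothesis Hqs : Sigma1 qs.
Hypothesis Hqp : Pi1 qp.
Hypothesis sfs : setfree qs.
Hypothesis sfp : setfree qp.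
Hypothesis HQ : QPresentationOK A qs qp.

Definition lQ (x y : M A) := ltQ A qs x y.

Lemma lQ_iff s x y : lQ x y <-> feval A (env2 A x y) s qs.
Proof.
  unfold lQ, ltQ. split.
  - intro H. apply H.
  - intros H s'. apply (setfree_indep A qs sfs _ s s'). exact H.
Qed.

Lemma lQ_irr x : ~ lQ x x. Proof. apply HQ. Qed.
Lemma lQ_trans x y z : lQ x y -> lQ y z -> lQ x z. Proof. apply HQ. Qed.
Lemma lQ_tri x y : lQ x y \/ x = y \/ lQ y x. Proof. apply HQ. Qed.
Lemma lQ_dense x y : lQ x y -> exists z, lQ x z /\ lQ z y. Proof. apply HQ. Qed.
Lemma lQ_nomax x : exists y, lQ x y. Proof. apply HQ. Qed.
Lemma lQ_asym x y : lQ x y -> ~ lQ y x.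
Proof. intros H1 H2. exact (lQ_irr x (lQ_trans _ _ _ H1 H2)). Qed.
Lemma lQ_ne x y : lQ x y -> x <> y.
Proof. intros H1 H2. subst. exact (lQ_irr _ H1). Qed.

Lemma Qset : exists Qs : S A, forall x y, mem (pr x y) Qs <-> lQ x y.
Proof.
  assert (Hq0 : exists q0, qs = FEx q0 /\ Delta0 q0).
  { destruct qs; simpl in Hqs; try contradiction. eauto. }
  assert (Hp0 : exists p0, qp = FAll p0 /\ Delta0 p0).
  { destruct qp; simpl in Hqp; try contradiction. eauto. }
  destruct Hq0 as [q0 [Eq Dq]]. destruct Hp0 as [p0 [Ep Dp]].
  set (σ := fun k => match k with 0 => Var 2 | 1 => Var 1 | 2 => Var 0 | _ => Zero end).
  set (f := FEx (FBEx (Add (Var 1) One) (FBEx (Add (Var 2) One)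
              (FAnd (FEq (Var 3) (pairT (Var 1) (Var 0))) (fsubst σ q0))))).
  set (g := FAll (FBEx (Add (Var 1) One) (FBEx (Add (Var 2) One)
              (FAnd (FEq (Var 3) (pairT (Var 1) (Var 0))) (fsubst σ p0))))).
  assert (Henv : forall (n w x y : M A) (e : nat -> M A),
    (fun k => teval A (scons y (scons x (scons w (scons n e)))) (σ k)) = scons w (env2 A x y)).
  { intros. extensionality k. destruct k as [|[|[|k]]]; reflexivity. }
  assert (HF : forall n, feval A (scons n E0) ss f <-> exists x y, n = pr x y /\ lQ x y).
  { intro n. unfold f. simpl. setoid_rewrite feval_subst. setoid_rewrite Henv. split.
    - intros [w [x [_ [y [_ [Hn Hw]]]]]]. exists x, y. split; [exact Hn|].
      apply (lQ_iff ss). rewrite Eq. simpl. exists w. exact Hw.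
    - intros [x [y [Hn Hl]]]. apply (proj1 (lQ_iff ss x y)) in Hl. rewrite Eq in Hl. simpl in Hl.
      destruct Hl as [w Hw]. exists w, x. split; [rewrite Hn; apply pr_bound1|].
      exists y. split; [rewrite Hn; apply pr_bound2|]. split; [exact Hn|exact Hw]. }
  assert (HG : forall n, feval A (scons n E0) ss g <-> exists x y, n = pr x y /\ lQ x y).
  { intro n. unfold g. simpl. setoid_rewrite feval_subst. setoid_rewrite Henv. split.
    - intros H. destruct (H zero) as [x [_ [y [_ [Hn _]]]]]. exists x, y. split; [exact Hn|].
      apply (lQ_iff ss). apply HQ. rewrite Ep. simpl. intro w.
      destruct (H w) as [x' [_ [y' [_ [Hn' Hw]]]]]. rewrite Hn in Hn'.
      destruct (pr_inj _ _ _ _ Hn') as [<- <-]. exact Hw.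
    - intros [x [y [Hn Hl]]] w. apply (proj1 (lQ_iff ss x y)) in Hl. apply HQ in Hl. rewrite Ep in Hl. simpl in Hl.
      exists x. split; [rewrite Hn; apply pr_bound1|].
      exists y. split; [rewrite Hn; apply pr_bound2|]. split; [exact Hn|apply Hl]. }
  destruct HR as [_ [_ HC]].
  destruct (HC f g) with (e := E0) (s := ss) as [X HX].
  - unfold f. simpl. rewrite Delta0_subst. tauto.
  - unfold g. simpl. rewrite Delta0_subst. tauto.
  - intro n. rewrite HF, HG. tauto.
  - exists X. intros x y. rewrite HX, HF. split.
    + intros [x' [y' [Hn Hl]]]. destruct (pr_inj _ _ _ _ Hn) as [<- <-]. exact Hl.
    + intro Hl. exists x, y. auto.
Qed.

Definition Dt (t y z : term) : formula :=
  FAnd (FMem t 0) (FAnd (FMem (pairT y t) 1) (FMem (pairT t z) 1)).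

Lemma le_of_not_lt (m w : M A) : ~ lt m w -> lt w (add m one).
Proof. intro H. apply ax8. destruct (not_lt_le _ _ H); auto. Qed.

Lemma lemmaL (H : S A)
  (Hd : forall u v, mem u H -> mem v H -> lQ u v -> exists w, mem w H /\ lQ u w /\ lQ w v)
  (y z : M A) (Hy : mem y H) (Hz : mem z H) (Hyz : lQ y z) :
  forall m, exists w, mem w H /\ lQ y w /\ lQ w z /\ lt m w.
Proof.
  intro m. destruct Qset as [Qs HQs].
  apply NNPP. intro N.
  assert (N' : forall w, mem w H -> lQ y w -> lQ w z -> lt w (add m one)).
  { intros w H1 H2 H3. apply le_of_not_lt. intro H4. apply N. exists w. auto. }
  clear N.
  set (D := fun w => mem w H /\ mem (pr y w) Qs /\ mem (pr w z) Qs).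
  assert (Claim : forall b, (exists w, lt w b /\ D w) ->
     exists w, lt w b /\ D w /\ forall v, lt v b -> D v -> ~ mem (pr v w) Qs).
  { refine (ind_d0 (FImp (FBEx (Var 0) (Dt (Var 0) (Var 2) (Var 3)))
       (FBEx (Var 0) (FAnd (Dt (Var 0) (Var 2) (Var 3))
          (FBAll (Var 1) (FImp (Dt (Var 0) (Var 3) (Var 4)) (FNeg (FMem (pairT (Var 0) (Var 1)) 1)))))))
       ltac:(simpl; tauto) (scons y (scons z E0)) (scons H (scons Qs ss)) _ _ _ _).
    - intro n. simpl. reflexivity.
    - intros [w [Hw _]]. destruct (ax7 _ Hw).
    - intros b IH [w [Hw Dw]].
      destruct (classic (exists w, lt w b /\ D w)) as [Ex|NEx].
      + destruct (IH Ex) as [w0 [Hw0 [Dw0 Min]]].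
        destruct (classic (D b /\ mem (pr b w0) Qs)) as [[Db Hb]|Nb].
        * exists b. split; [apply ax8; auto|]. split; [exact Db|].
          intros v Hv Dv Hvb. apply ax8 in Hv. destruct Hv as [Hv|Hv].
          -- apply (Min v Hv Dv). apply HQs. apply HQs in Hvb. apply HQs in Hb. eapply lQ_trans; eauto.
          -- subst. apply HQs in Hvb. exact (lQ_irr _ Hvb).
        * exists w0. split; [apply ax8; auto|]. split; [exact Dw0|].
          intros v Hv Dv Hvw. apply ax8 in Hv. destruct Hv as [Hv|Hv].
          -- exact (Min v Hv Dv Hvw).
          -- subst. apply Nb. auto.
      + assert (w = b).
        { apply ax8 in Hw. destruct Hw as [Hw|Hw]; auto. exfalso. apply NEx. eauto. }
        subst w. exists b. split; [apply ax8; auto|]. split; [exact Dw|].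
        intros v Hv Dv Hvb. apply ax8 in Hv. destruct Hv as [Hv|Hv].
        -- apply NEx. eauto.
        -- subst. apply HQs in Hvb. exact (lQ_irr _ Hvb). }
  destruct (Hd y z Hy Hz Hyz) as [w1 [Hw1 [Hyw1 Hw1z]]].
  destruct (Claim (add m one)) as [w0 [Hw0 [[Dw0a [Dw0b Dw0c]] Min]]].
  { exists w1. split; [apply N'; auto|]. split; [exact Hw1|]. split; apply HQs; auto. }
  apply HQs in Dw0b. apply HQs in Dw0c.
  destruct (Hd y w0 Hy Dw0a Dw0b) as [v [Hv [Hyv Hvw0]]].
  assert (Hvz : lQ v z) by (eapply lQ_trans; eauto).
  apply (Min v).
  - apply N'; auto.
  - split; [exact Hv|]. split; apply HQs; auto.
  - apply HQs. exact Hvw0.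
Qed.

Lemma two_ordered (H : S A) : (exists x y, mem x H /\ mem y H /\ x <> y) ->
  exists y z, mem y H /\ mem z H /\ lQ y z.
Proof.
  intros [x [y [Hx [Hy Hne]]]]. destruct (lQ_tri x y) as [H1|[H1|H1]].
  - exists x, y; auto.
  - contradiction.
  - exists y, x; auto.
Qed.

Lemma part2 (HER1 : ER1 A qs) (k : M A) (F : S A) : isFunInto A F k ->
  exists (H : S A) (c : M A), infinite A H /\ forall x, mem x H -> mem (pair A x c) F.
Proof.
  intro HF. destruct (HER1 k F HF) as [H [c [[Htwo Hdense] Hcol]]].
  exists H, c. split; [|exact Hcol].
  destruct (two_ordered H Htwo) as [y [z [Hy [Hz Hyz]]]].
  intro m. destruct (lemmaL H Hdense y z Hy Hz Hyz m) as [w [Hw [_ [_ Hmw]]]].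
  exists w. auto.
Qed.

Lemma zero_ne_one : (zero : M A) <> one.
Proof. intro H. apply (ax1 zero). rewrite add0l. symmetry. exact H. Qed.

Lemma funcol (F : S A) k (HF : isFunInto A F k) x c c' :
  mem (pr x c) F -> mem (pr x c') F -> c = c'.
Proof.
  intros H1 H2. destruct (HF x) as [d [_ [_ Hu]]].
  rewrite (Hu c H1), (Hu c' H2). reflexivity.
Qed.

Lemma part1_I (HI : ISigma02 A) (n : M A) (F : S A) (HF : isFunInto A F n) :
  exists (H : S A) (c : M A), denseQ A qs H /\ forall x, mem x H -> mem (pair A x c) F.
Proof.
  destruct Qset as [Qs HQs].
  set (col := fun x c => mem (pr x c) F).
  set (P := fun j => exists a b, lQ a b /\ forall x, lQ a x -> lQ x b -> forall c, lt c j -> ~ col x c).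
  set (g := FBEx (Add (Var 1) One) (FBEx (Add (Var 2) One)
     (FAnd (FEq (Var 3) (pairT (Var 1) (Var 0)))
     (FAnd (FMem (pairT (Var 1) (Var 0)) 1)
     (FImp (FAnd (FMem (pairT (Var 1) (Var 2)) 1) (FMem (pairT (Var 2) (Var 0)) 1))
           (FBAll (Var 4) (FNeg (FMem (pairT (Var 3) (Var 0)) 0)))))))).
  set (sE := scons F (scons Qs ss)).
  assert (HP : forall j, feval A (scons j E0) sE (FEx (FAll g)) <-> P j).
  { intro j. unfold g, P. simpl. split.
    - intros [p Hp]. destruct (Hp zero) as [a [_ [b [_ [Hpe [Hab _]]]]]].
      exists a, b. split; [apply HQs; exact Hab|].
      intros x Hax Hxb c Hc Hcol.
      destruct (Hp x) as [a' [_ [b' [_ [Hpe' [_ Himp]]]]]].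
      rewrite Hpe in Hpe'. destruct (pr_inj _ _ _ _ Hpe') as [<- <-].
      apply (Himp (conj (proj2 (HQs a x) Hax) (proj2 (HQs x b) Hxb)) c Hc Hcol).
    - intros [a [b [Hab Hx]]]. exists (pr a b). intro x.
      exists a. split; [apply pr_bound1|]. exists b. split; [apply pr_bound2|].
      split; [reflexivity|]. split; [apply HQs; exact Hab|].
      intros [H1 H2] c Hc. apply (Hx x); auto; apply HQs; auto. }
  assert (NPn : ~ P n).
  { intros [a [b [Hab Hx]]]. destruct (lQ_dense a b Hab) as [x [Hax Hxb]].
    destruct (HF x) as [c [Hc [Hcx _]]]. exact (Hx x Hax Hxb c Hc Hcx). }
  assert (P0 : P zero).
  { destruct (lQ_nomax zero) as [b Hb]. exists zero, b. split; [exact Hb|].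
    intros x _ _ c Hc. destruct (ax7 _ Hc). }
  assert (Hj : exists j, P j /\ ~ P (add j one)).
  { apply NNPP. intro Hn. apply NPn.
    refine (proj1 (HP n) _).
    apply HI; [simpl; unfold g; simpl; tauto| |].
    - apply HP. exact P0.
    - intros m Hm. apply HP. apply HP in Hm. apply NNPP. intro Hc. apply Hn. exists m. auto. }
  destruct Hj as [j [[a [b [Hab Hpj]]] Npj]].
  assert (Sub : forall a' b', (a' = a \/ lQ a a') -> (b' = b \/ lQ b' b) -> lQ a' b' ->
             exists x, lQ a' x /\ lQ x b' /\ col x j).
  { intros a' b' Ha' Hb' Hab'. apply NNPP. intro Hn. apply Npj. exists a', b'. split; [exact Hab'|].
    intros x Hax Hxb c Hc Hcol. apply ax8 in Hc. destruct Hc as [Hc|Hc].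
    - refine (Hpj x _ _ c Hc Hcol).
      + destruct Ha' as [Ha'|Ha']; [subst; exact Hax|eapply lQ_trans; eauto].
      + destruct Hb' as [Hb'|Hb']; [subst; exact Hxb|eapply lQ_trans; eauto].
    - subst c. apply Hn. exists x. auto. }
  destruct (comp_d0 (FAnd (FMem (pairT (Var 1) (Var 0)) 1) (FAnd (FMem (pairT (Var 0) (Var 2)) 1)
                    (FMem (pairT (Var 0) (Var 3)) 0))) ltac:(simpl; tauto)
      (scons a (scons b (scons j E0))) sE
      (fun x => mem (pr a x) Qs /\ mem (pr x b) Qs /\ mem (pr x j) F)) as [H HH].
  { intro x. simpl. reflexivity. }
  assert (HH' : forall x, mem x H <-> lQ a x /\ lQ x b /\ col x j).
  { intro x. rewrite HH, !HQs. reflexivity. }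
  exists H, j. split; [split|].
  - destruct (lQ_dense a b Hab) as [x1 [Hax1 Hx1b]].
    destruct (Sub a x1 (or_introl eq_refl) (or_intror Hx1b) Hax1) as [y1 [Hay1 [Hy1x1 Hy1]]].
    destruct (Sub x1 b (or_intror Hax1) (or_introl eq_refl) Hx1b) as [y2 [Hx1y2 [Hy2b Hy2]]].
    assert (M1 : mem y1 H) by (apply HH'; split; [exact Hay1|split; [exact (lQ_trans _ _ _ Hy1x1 Hx1b)|exact Hy1]]).
    assert (M2 : mem y2 H) by (apply HH'; split; [exact (lQ_trans _ _ _ Hax1 Hx1y2)|split; [exact Hy2b|exact Hy2]]).
    exists y1, y2. split; [exact M1|]. split; [exact M2|].
    apply lQ_ne. exact (lQ_trans _ _ _ Hy1x1 Hx1y2).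
  - intros u v Hu Hv Huv. apply HH' in Hu. apply HH' in Hv.
    destruct Hu as [Hau [Hub _]]. destruct Hv as [Hav [Hvb _]].
    destruct (Sub u v (or_intror Hau) (or_intror Hvb) Huv) as [w [Huw [Hwv Hw]]].
    exists w. split; [|split; [exact Huw|exact Hwv]].
    apply HH'. split; [exact (lQ_trans _ _ _ Hau Huw)|split; [exact (lQ_trans _ _ _ Hwv Hvb)|exact Hw]].
  - intros x Hx. apply HH' in Hx. apply Hx.
Qed.

Lemma lt_add_mono (a b j : M A) : lt a b -> lt (add a j) (add b j).
Proof. rewrite !lt_iff. intros [d Hd]. exists d. rewrite Hd. ring. Qed.

Lemma not_lt_add_self (c k : M A) : ~ lt (add c k) k.
Proof.
  intro H. apply lt_iff in H. destruct H as [d Hd].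
  assert (H2 : add k zero = add k (add (add c d) one)) by (rewrite ax3 at 1; rewrite Hd at 1; ring).
  apply add_cancel_l in H2. apply (ax1 (add c d)). symmetry. exact H2.
Qed.

Lemma part1_E (HE : ER22 A qs) (k : M A) (F : S A) (HF : isFunInto A F k) :
  exists (H : S A) (c : M A), denseQ A qs H /\ forall x, mem x H -> mem (pair A x c) F.
Proof.
  set (col := fun x c => mem (pr x c) F).
  set (Less := fun x y => exists a, lt a k /\ exists b, lt b k /\ (col x a /\ (col y b /\ lt a b))).
  set (LessF := FBEx (Var 5) (FBEx (Var 6) (FAnd (FMem (pairT (Var 3) (Var 1)) 0)
                  (FAnd (FMem (pairT (Var 2) (Var 0)) 0) (FLt (Var 1) (Var 0)))))).
  destruct (comp_d0 (FBEx (Add (Var 0) One) (FBEx (Add (Var 1) One) (FBEx (Add (Var 1) One)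
      (FBEx (Add (Var 2) One) (FAnd (FEq (Var 4) (pairT (Var 3) (Var 2)))
         (FAnd (FEq (Var 3) (pairT (Var 1) (Var 0))) (FAnd (FLt (Var 1) (Var 0))
           (FOr (FAnd (FEq (Var 2) Zero) LessF) (FAnd (FEq (Var 2) One) (FNeg LessF)))))))))) ltac:(simpl; tauto)
      (scons k E0) (scons F ss)
      (fun N => exists p, lt p (add N one) /\ exists c, lt c (add N one) /\ exists x, lt x (add p one) /\
          exists y, lt y (add p one) /\ (N = pr p c /\ (p = pr x y /\ (lt x y /\
          ((c = zero /\ Less x y) \/ (c = one /\ ~ Less x y))))))) as [G HG].
  { intro N. simpl. reflexivity. }
  assert (Gmem : forall x y c, mem (pr (pr x y) c) G <-> lt x y /\ ((c = zero /\ Less x y) \/ (c = one /\ ~ Less x y))).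
  { intros x y c. rewrite HG. split.
    - intros [p [_ [c' [_ [x' [_ [y' [_ [E1 [E2 R]]]]]]]]]].
      destruct (pr_inj _ _ _ _ E1) as [E3 <-]. subst p.
      destruct (pr_inj _ _ _ _ E3) as [<- <-]. exact R.
    - intro R. exists (pr x y). split; [apply pr_bound1|]. exists c. split; [apply pr_bound2|].
      exists x. split; [apply pr_bound1|]. exists y. split; [apply pr_bound2|]. auto. }
  assert (LessE : forall x y cx cy, col x cx -> col y cy -> (Less x y <-> lt cx cy)).
  { intros x y cx cy Hx Hy. split.
    - intros [a [_ [b [_ [Ha [Hb Hab]]]]]].
      rewrite (funcol F k HF x cx a Hx Ha), (funcol F k HF y cy b Hy Hb). exact Hab.
    - intro H. destruct (HF x) as [a [Ha [Hxa _]]]. destruct (HF y) as [b [Hb [Hyb _]]].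
      exists a. split; [exact Ha|]. exists b. split; [exact Hb|]. split; [exact Hxa|]. split; [exact Hyb|].
      rewrite <- (funcol F k HF x cx a Hx Hxa), <- (funcol F k HF y cy b Hy Hyb). exact H. }
  assert (HG2 : is2Coloring A G).
  { intros x y Hxy. destruct (classic (Less x y)) as [L|L].
    - exists zero. split; [apply zero_lt_succ|]. split.
      + apply Gmem. auto.
      + intros c' Hc'. apply Gmem in Hc'. destruct Hc' as [_ [[E _]|[_ E]]]; [exact E|contradiction].
    - exists one. split; [apply ax8; right; reflexivity|]. split.
      + apply Gmem. auto.
      + intros c' Hc'. apply Gmem in Hc'. destruct Hc' as [_ [[_ E]|[E _]]]; [contradiction|exact E]. }
  destruct (HE G HG2) as [[H [Hinf Hhom]]|[H [Hden Hhom]]].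
  -
    exfalso.
    assert (Hl : forall x y, mem x H -> mem y H -> lt x y -> Less x y).
    { intros x y Hx Hy Hxy. destruct (Hhom x y Hx Hy (lt_ne _ _ Hxy)) as [[_ Hm]|[Hyx _]].
      - apply Gmem in Hm. destruct Hm as [_ [[_ L]|[E _]]]; [exact L|destruct (zero_ne_one E)].
      - destruct (lt_asym _ _ Hxy Hyx). }
    assert (R : forall j, exists x, mem x H /\ exists c, lt c k /\ (col x c /\ ~ lt c j)).
    { refine (ind_s1 (FAnd (FMem (Var 0) 1) (FBEx (Var 2) (FAnd (FMem (pairT (Var 1) (Var 0)) 0)
           (FNeg (FLt (Var 0) (Var 2)))))) ltac:(simpl; tauto) (scons k E0) (scons F (scons H ss)) _ _ _ _).
      - intro j. simpl. reflexivity.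
      - destruct (Hinf zero) as [x [_ Hx]]. destruct (HF x) as [c [Hc [Hcx _]]].
        exists x. split; [exact Hx|]. exists c. split; [exact Hc|]. split; [exact Hcx|apply ax7].
      - intros j [x [Hx [c [Hc [Hcx Hcj]]]]].
        destruct (Hinf x) as [y [Hxy Hy]]. destruct (HF y) as [d [Hd [Hyd _]]].
        pose proof (proj1 (LessE x y c d Hcx Hyd) (Hl x y Hx Hy Hxy)) as Hcd.
        exists y. split; [exact Hy|]. exists d. split; [exact Hd|]. split; [exact Hyd|].
        intro Hdj. apply ax8 in Hdj.
        assert (Hjd : lt j d) by (apply (le_lt_trans j c d); [destruct (not_lt_le _ _ Hcj); auto|exact Hcd]).
        destruct Hdj as [Hdj|Hdj]; [exact (lt_asym _ _ Hjd Hdj)|subst; exact (lt_irrefl _ Hjd)]. }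
    destruct (R k) as [x [_ [c [Hc [_ Hc']]]]]. contradiction.
  -
    destruct Hden as [Htwo Hdense].
    assert (Hl : forall x y, mem x H -> mem y H -> lt x y -> ~ Less x y).
    { intros x y Hx Hy Hxy. destruct (Hhom x y Hx Hy (lt_ne _ _ Hxy)) as [[_ Hm]|[Hyx _]].
      - apply Gmem in Hm. destruct Hm as [_ [[E _]|[_ L]]]; [destruct (zero_ne_one (eq_sym E))|exact L].
      - destruct (lt_asym _ _ Hxy Hyx). }
    assert (Stab : exists x0, mem x0 H /\ exists c0, col x0 c0 /\
              forall y, mem y H -> lt x0 y -> forall d, col y d -> ~ lt d c0).
    { apply NNPP. intro Nst.
      assert (Nst' : forall x0, mem x0 H -> forall c0, col x0 c0 -> exists y, mem y H /\ lt x0 y /\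
                 exists d, col y d /\ lt d c0).
      { intros x0 Hx0 c0 Hc0. apply NNPP. intro Hn. apply Nst. exists x0. split; [exact Hx0|].
        exists c0. split; [exact Hc0|]. intros y Hy Hxy d Hd Hdc. apply Hn. exists y. split; [exact Hy|].
        split; [exact Hxy|]. exists d. auto. }
      assert (Z : forall j, exists x, mem x H /\ exists c, lt c k /\ (col x c /\ lt (add c j) k)).
      { refine (ind_s1 (FAnd (FMem (Var 0) 1) (FBEx (Var 2) (FAnd (FMem (pairT (Var 1) (Var 0)) 0)
           (FLt (Add (Var 0) (Var 2)) (Var 3))))) ltac:(simpl; tauto) (scons k E0) (scons F (scons H ss)) _ _ _ _).
        - intro j. simpl. reflexivity.
        - destruct Htwo as [x [_ [Hx _]]]. destruct (HF x) as [c [Hc [Hcx _]]].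
          exists x. split; [exact Hx|]. exists c. split; [exact Hc|]. split; [exact Hcx|rewrite ax3; exact Hc].
        - intros j [x [Hx [c [Hc [Hcx Hcj]]]]].
          destruct (Nst' x Hx c Hcx) as [y [Hy [Hxy [d [Hyd Hdc]]]]].
          destruct (HF y) as [d' [Hd' [Hyd' _]]]. rewrite <- (funcol F k HF y d d' Hyd Hyd') in Hd'.
          exists y. split; [exact Hy|]. exists d. split; [exact Hd'|]. split; [exact Hyd|].
          replace (add d (add j one)) with (add (add d one) j) by ring.
          apply (le_lt_trans _ (add c j)); [|exact Hcj].
          destruct (lt_S_le _ _ Hdc) as [H1|H1]; [left; apply lt_add_mono; exact H1|right; rewrite H1; reflexivity]. }
      destruct (Z k) as [x [_ [c [_ [_ Hck]]]]]. exact (not_lt_add_self _ _ Hck). }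
    destruct Stab as [x0 [Hx0 [c0 [Hc0 Hst]]]].
    destruct (comp_d0 (FAnd (FMem (Var 0) 0) (FLt (Var 1) (Var 0))) ltac:(simpl; tauto)
       (scons x0 E0) (scons H ss) (fun w => mem w H /\ lt x0 w)) as [H' HH'].
    { intro w. simpl. reflexivity. }
    exists H', c0. split; [split|].
    + destruct (two_ordered H Htwo) as [y0 [z0 [Hy0 [Hz0 Hyz]]]].
      destruct (lemmaL H Hdense y0 z0 Hy0 Hz0 Hyz x0) as [w1 [Hw1 [Hyw1 [Hw1z Hxw1]]]].
      destruct (lemmaL H Hdense y0 w1 Hy0 Hw1 Hyw1 x0) as [w2 [Hw2 [Hyw2 [Hw2w1 Hxw2]]]].
      exists w1, w2. split; [apply HH'; auto|]. split; [apply HH'; auto|].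
      intro E. subst. exact (lQ_irr _ Hw2w1).
    + intros u v Hu Hv Huv. apply HH' in Hu. apply HH' in Hv.
      destruct (lemmaL H Hdense u v (proj1 Hu) (proj1 Hv) Huv x0) as [w [Hw [Huw [Hwv Hxw]]]].
      exists w. split; [apply HH'; auto|]. split; [exact Huw|exact Hwv].
    + intros w Hw. apply HH' in Hw. destruct Hw as [Hw Hxw].
      destruct (HF w) as [d [Hd [Hwd _]]].
      assert (N1 : ~ lt d c0) by (apply (Hst w Hw Hxw d Hwd)).
      assert (N2 : ~ lt c0 d) by (intro H1; apply (Hl x0 w Hx0 Hw Hxw); apply (LessE x0 w c0 d Hc0 Hwd); exact H1).
      destruct (trich c0 d) as [H1|[H1|H1]]; [contradiction| |contradiction].
      rewrite H1. exact Hwd.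
Qed.

End Model.

Theorem mainTheorem4 :
  forall (qs qp : formula),
    Sigma1 qs -> Pi1 qp -> setfree qs -> setfree qp ->
  forall (A : L2structure),
    RCA0 A -> QPresentationOK A qs qp ->
    ((ER22 A qs \/ ISigma02 A) -> ER1 A qs) /\ (ER1 A qs -> RT1 A).
Proof.
  intros qs qp Hqs Hqp sfs sfp A HR HQ. split.
  - intros [HE|HI] n F HF.
    + exact (part1_E A HR F qs qp Hqs Hqp sfs sfp HQ HE n F HF).
    + exact (part1_I A HR F qs qp Hqs Hqp sfs sfp HQ HI n F HF).
  - intros HER1 k F HF. exact (part2 A HR F qs qp Hqs Hqp sfs sfp HQ HER1 k F HF).
Qed.
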